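(* Let $f(x)\in\mathbb C[x]$ be nonzero with $f(0)\ne0$. Then $f(x^m)$ divides $f(x^n)$ in $\mathbb C[x]$ whenever $m\mid n$ if and only if $f(x)$ is a nonzero constant multiple of $\operatorname{lcm}_{m\ge1}(x^m-1)^{h_m}$ (lcm in $\mathbb C[x]$) for some integers $h_m\ge0$, only finitely many of which are nonzero. *)

(* Defs.v *)
(* Complex numbers are modelled as R[i] (mathcomp-real-closed
   `complex`) over an arbitrary R : realType (a complete archimedean ordered
   field, i.e. a model of the reals). *)
From HB Require Import structures.
From mathcomp Require Import all_boot all_order all_algebra.
From mathcomp Require Import complex.
From mathcomp Require Import reals.
Set Implicit Arguments. Unset Strict Implicit. Unset Printing Implicit Defensive.
Import Order.TTheory GRing.Theory Num.Theory.
Local Open Scope ring_scope.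

Definition is_lcm_pos (F : fieldType) (g : nat -> {poly F}) (L : {poly F}) : Prop :=
  (forall m : nat, (0 < m)%N -> g m %| L) /\
  (forall M : {poly F}, (forall m : nat, (0 < m)%N -> g m %| M) -> L %| M).

(* Main.v *)
Require Import Defs.
From HB Require Import structures.
From mathcomp Require Import all_boot all_order all_algebra.
From mathcomp Require Import complex.
From mathcomp Require Import reals.
Import Order.TTheory GRing.Theory Num.Theory.
Local Open Scope ring_scope.
Set Implicit Arguments. Unset Strict Implicit. Unset Printing Implicit Defensive.

Section Aux.
Variable F : numClosedFieldType.
Implicit Types p q : {poly F}.

Lemma mup_dvdp x p q : q != 0 -> p %| q -> (mup x p <= mup x q)%N.
Proof.
move=> q0 pq; have [p0|p0] := eqVneq p 0; first by move: pq; rewrite p0 dvd0p (negPf q0).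
by rewrite mup_geq // (dvdp_trans _ pq) // -mup_geq.
Qed.

Lemma dvdp_mup p q : p != 0 -> q != 0 -> (forall x, mup x p <= mup x q)%N -> p %| q.
Proof.
move: {2}(size p) (leqnn (size p)) => n; elim: n p q => [|n IH] p q.
  by rewrite size_poly_leq0 => /eqP-> ; rewrite eqxx.
move=> sp p0 q0 H.
have [/closed_rootP [a ra]|/negPn sp1] := boolP (size p != 1%N); last first.
  by rewrite size_poly_eq1 in sp1; rewrite (eqp_dvdl _ sp1) dvd1p.
have Xa0 : 'X - a%:P != 0 by rewrite polyXsubC_eq0.
have dp : 'X - a%:P %| p by rewrite dvdp_XsubCl.
have dq : 'X - a%:P %| q.
  by rewrite XsubC_dvd // (leq_trans _ (H a)) // -XsubC_dvd.
rewrite -(divpK dp) -(divpK dq) dvdp_mul2r //.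
have p'0 : p %/ ('X - a%:P) != 0.
  by apply: contraNneq p0 => e; rewrite -(divpK dp) e mul0r.
have q'0 : q %/ ('X - a%:P) != 0.
  by apply: contraNneq q0 => e; rewrite -(divpK dq) e mul0r.
apply: IH => // [|x].
  have szp : size p = (size (p %/ ('X - a%:P))).+1.
    by rewrite -{1}(divpK dp) size_mul // size_XsubC addn2.
  by rewrite -ltnS -szp.
by have := H x; rewrite -{1}(divpK dp) -{1}(divpK dq) !mupM // leq_add2r.
Qed.

Lemma mupX x p n : p != 0 -> mup x (p ^+ n) = (mup x p * n)%N.
Proof.
move=> p0; elim: n => [|n IH]; first by rewrite expr0 muln0 mupNroot // root1.
by rewrite exprS mupM ?expf_neq0 // IH mulnS.
Qed.


Lemma comp_polyX' p r n : (p ^+ n) \Po r = (p \Po r) ^+ n.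
Proof.
elim: n => [|n IH]; first by rewrite !expr0 -polyC1 comp_polyC.
by rewrite !exprS comp_polyM IH.
Qed.

Lemma mup_XnsubC (a : F) j : a != 0 -> (0 < j)%N -> mup a ('X^j - (a ^+ j)%:P) = 1%N.
Proof.
move=> a0 j0.
have E := subrXX 'X (a%:P) j.
rewrite -(rmorphXn polyC) in E; rewrite E mupMl.
  by rewrite (@mup_XsubCX F 1) eqxx.
rewrite /root horner_sum.
have -> : \sum_(i < j) ('X ^+ (j.-1 - i) * a%:P ^+ i).[a] = \sum_(i < j) a ^+ j.-1.
  apply: eq_bigr => i _; rewrite hornerM horner_exp hornerX -(rmorphXn polyC) hornerC -exprD subnK //.
  by rewrite -ltnS prednK.
by rewrite sumr_const card_ord mulrn_eq0 negb_or -lt0n j0 expf_neq0.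
Qed.

Lemma mup_comp (a : F) q j : a != 0 -> (0 < j)%N -> q != 0 ->
  mup a (q \Po 'X^j) = mup (a ^+ j) q.
Proof.
move=> a0 j0 q0.
have [k [g]] := multiplicity_XsubC q (a ^+ j); rewrite q0 /= => gN qE.
rewrite qE mupMr // (mup_XsubCX) eqxx comp_polyM comp_polyX' comp_polyB comp_polyX comp_polyC.
rewrite mupMr; last by rewrite /root horner_comp hornerXn.
rewrite mupX ?mup_XnsubC ?mul1n //.
by rewrite -size_poly_eq0 size_XnsubC.
Qed.


Lemma root_unity f (a : F) : f != 0 -> a != 0 -> (forall j, (0 < j)%N -> root f (a ^+ j)) ->
  exists d, (0 < d)%N /\ a ^+ d = 1.
Proof.
move=> f0 a0 Hr.
pose s := [seq a ^+ i.+1 | i <- iota 0 (size f)].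
have : ~~ uniq s.
  apply/negP => us.
  have allr : all (root f) s by apply/allP => x /mapP [i _ ->]; apply: Hr.
  by have := max_poly_roots f0 allr us; rewrite size_map size_iota ltnn.
case/(uniqPn 0) => i [j [ij js]].
rewrite size_map size_iota in js.
rewrite !(nth_map 0%N) ?size_iota ?(ltn_trans ij) // !nth_iota ?(ltn_trans ij) // !add0n.
move=> E; exists (j - i)%N; split; first by rewrite subn_gt0.
have ai0 : a ^+ i.+1 != 0 by rewrite expf_neq0.
apply: (mulfI ai0); rewrite -exprD mulr1 addSn subnKC ?E //.
by apply: ltnW.
Qed.

Definition hpow (f : {poly F}) (m : nat) : nat :=
  [arg max_(n > (ord0 : 'I_(size f).+1) | ('X^m - 1) ^+ n %| f) n].

Lemma hpow_geq (f : {poly F}) m n : f != 0 -> (0 < m)%N ->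
  (n <= hpow f m)%N = (('X^m - 1) ^+ n %| f).
Proof.
move=> q_neq0 m0; rewrite /hpow; symmetry.
case: arg_maxnP; rewrite ?expr0 ?dvd1p//= => i i_dvd gti.
case: ltnP => [|/(dvdp_exp2l ('X^m - 1))/dvdp_trans]; last exact.
apply: contraTF => dvdq; rewrite -leqNgt.
suff n_small : (n < (size f).+1)%N by exact: (gti (Ordinal n_small)).
have s0 : size ('X^m - 1 : {poly F}) = m.+1 by rewrite -polyC1 size_XnsubC.
have := dvdp_leq q_neq0 dvdq.
have := size_exp ('X^m - 1 : {poly F}) n; rewrite s0 /= => E.
have sz : (n <= (size (('X^m - 1 : {poly F}) ^+ n)).-1)%N.
  by rewrite E leq_pmull.
move=> le; rewrite ltnS (leq_trans sz) // (leq_trans (leq_pred _)) //.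
Qed.

Lemma hpow0 (f : {poly F}) m : f != 0 -> (size f < m)%N -> hpow f m = 0%N.
Proof.
move=> f0 fm; apply/eqP; rewrite -leqn0 leqNgt.
have m0 : (0 < m)%N by apply: leq_ltn_trans fm.
rewrite hpow_geq // expr1; apply/negP => /(dvdp_leq f0).
by rewrite -polyC1 size_XnsubC // leqNgt ltnS ltnW.
Qed.

Section Fwd.
Variable f : {poly F}.
Hypothesis f0 : f != 0.
Hypothesis f00 : f.[0] != 0.
Hypothesis Hd : forall j, (0 < j)%N -> f %| f \Po 'X^j.

Lemma L1 (a : F) j : (0 < j)%N -> (mup a f <= mup (a ^+ j) f)%N.
Proof.
move=> j0; have [->|] := eqVneq (mup a f) 0%N; first by [].
move=> ma0; have ra : root f a by rewrite -dvdp_XsubCl XsubC_dvd // lt0n.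
have a0 : a != 0 by apply: contraNneq f00 => a0; move: ra; rewrite a0 rootE.
have fc0 : f \Po 'X^j != 0.
  apply: contraNneq f00 => e.
  have : (f \Po 'X^j).[0] = f.[0] by rewrite horner_comp hornerXn expr0n gtn_eqF.
  by rewrite e horner0 => <-.
by rewrite -mup_comp // mup_dvdp // Hd.
Qed.

Lemma fwd : is_lcm_pos (fun m => ('X^m - 1) ^+ hpow f m) f.
Proof.
split=> [m m0|M HM]; first by rewrite -hpow_geq.
have [->|M0] := eqVneq M 0; first by rewrite dvdp0.
apply: dvdp_mup => // a.
have [->|ma0] := eqVneq (mup a f) 0%N; first by [].
have ma : (0 < mup a f)%N by rewrite lt0n.
have ra : root f a by rewrite -dvdp_XsubCl XsubC_dvd.
have a0 : a != 0 by apply: contraNneq f00 => a0; move: ra; rewrite a0 rootE.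
have [dd [d0p ad0]] : exists d, (0 < d)%N /\ a ^+ d = 1.
  apply: (root_unity f0 a0) => j j0; rewrite -dvdp_XsubCl (XsubC_dvd _ f0).
  exact: leq_trans ma (L1 _ j0).
have [d prim _] := prim_order_exists d0p ad0.
have d0 := prim_order_gt0 prim.
have L1' : forall i, (mup a f <= mup (a ^+ i) f)%N.
  move=> i; have -> : a ^+ i = a ^+ (i + d) by rewrite exprD (prim_expr_order prim) mulr1.
  by apply: L1; rewrite addn_gt0 d0 orbT.
set e := mup a f.
have Xd0 : ('X^d - 1 : {poly F}) != 0 by rewrite -size_poly_eq0 -polyC1 size_XnsubC.
have dvf : ('X^d - 1) ^+ e %| f.
  apply: dvdp_mup; [by rewrite expf_neq0|exact: f0|].
  move=> b; rewrite (mupX _ _ Xd0) -(factor_Xn_sub_1 prim).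
  rewrite -(big_map (fun i => a ^+ i) xpredT (fun y => 'X - y%:P)) mu_prod_XsubC.
  have U : uniq [seq a ^+ i | i <- index_iota 0 d].
    rewrite map_inj_in_uniq ?iota_uniq // => i j.
    rewrite !mem_index_iota => ltin ltjn /eqP.
    by rewrite (eq_prim_root_expr prim) !modn_small // => /eqP.
  rewrite (count_uniq_mem _ U).
  case: mapP => [[i _ ->]|_]; last by rewrite mul0n.
  by rewrite mul1n L1'.
have eh : (e <= hpow f d)%N by rewrite (hpow_geq _ f0 d0).
rewrite (mup_geq _ _ M0); apply: dvdp_trans (dvdp_exp2l _ eh) _; apply: dvdp_trans _ (HM d d0).
by rewrite dvdp_exp2r // dvdp_XsubCl /root !hornerE (prim_expr_order prim) subrr.
Qed.
End Fwd.

Lemma bwd (h : nat -> nat) (L : {poly F}) k :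
  is_lcm_pos (fun m => ('X^m - 1) ^+ h m) L -> (0 < k)%N -> L %| L \Po 'X^k.
Proof.
case=> H1 H2 k0; apply: H2 => j j0.
apply: dvdp_trans (dvdp_comp_poly ('X^k) (H1 j j0)).
rewrite comp_polyX' comp_polyB comp_Xn_poly (comp_polyC 1) polyC1.
apply: dvdp_exp2r; rewrite exprAC.
have E := subrXX ('X^j : {poly F}) 1 k; rewrite expr1n in E; rewrite E.
exact: dvdp_mulr.
Qed.

End Aux.

Unset Implicit Arguments.

Theorem proposition1 (R : realType) (f : {poly R[i]}) :
  f != 0 -> f.[0] != 0 ->
  ((forall m n : nat, (0 < m)%N -> (0 < n)%N -> (m %| n)%N ->
      (f \Po 'X^m) %| (f \Po 'X^n)) <->
   (exists h : nat -> nat,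
      (exists N : nat, forall m : nat, (N < m)%N -> h m = 0%N) /\
      exists (c : R[i]) (L : {poly R[i]}),
        c != 0 /\ is_lcm_pos (fun m => ('X^m - 1) ^+ h m) L /\ f = c *: L)).
Proof.
move=> f0 f00; split.
  move=> H; exists (hpow f); split.
    by exists (size f) => m; apply: hpow0.
  exists 1, f; split; first exact: oner_neq0.
  split; last by rewrite scale1r.
  apply: fwd => // j j0.
  by have := H 1%N j (ltnSn 0) j0 (dvd1n j); rewrite expr1 comp_polyXr.
move=> [h [_ [c [L [c0 [HL ->]]]]]] m n m0 n0 /dvdnP [k nk].
have k0 : (0 < k)%N by move: n0; rewrite nk muln_gt0 => /andP [].
rewrite !comp_polyZ dvdpZl // dvdpZr //.
have := dvdp_comp_poly ('X^m) (bwd HL k0).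
by rewrite -comp_polyA comp_Xn_poly -exprM mulnC nk.
Qed.
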